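(* Let $S_\alpha$ and $S_{\alpha'}$ be standard graded skew polynomial algebras in $n$ variables over $k$. If $\alpha'=\mu_{v,\lambda}(\alpha)$ for some $1\le v\le n$ and some $\lambda\in k^\times$, then the categories $\mathrm{GrMod}\,S_\alpha$ and $\mathrm{GrMod}\,S_{\alpha'}$ are equivalent.
   Context: Let $k$ be an algebraically closed field of characteristic $0$. For a matrix $\alpha=(\alpha_{ij})\in M_n(k)$ with $\alpha_{ii}=1$ and $\alpha_{ij}\alpha_{ji}=1$ for all $i,j$, the standard graded skew polynomial algebra is $S_\alpha=k\langle x_1,\dots,x_n\rangle/(x_ix_j-\alpha_{ij}x_jx_i \mid 1\le i,j\le n)$ with $\deg x_i=1$. $\mathrm{GrMod}\,S$ denotes the category of $\mathbb{Z}$-graded right $S$-modules with degree-preserving module homomorphisms. For such $\alpha$, $1\le v\le n$ and $\lambda\in k^\times$, define $\mu_{v,\lambda}(\alpha)=(\beta_{ij})$ by $\beta_{vi}=\lambda^{-1}\alpha_{vi}$ and $\beta_{iv}=\lambda\alpha_{iv}$ for $i\ne v$, and $\beta_{ij}=\alpha_{ij}$ otherwise. *)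

(* Defs.v *)
From HB Require Import structures.
From mathcomp Require Import all_boot all_order all_algebra.
Unset Printing Implicit Defensive.
Import Order.TTheory GRing.Theory Num.Theory.
Local Open Scope ring_scope.

Definition skew_param {k : fieldType} {n : nat} (a : 'M[k]_n) : Prop :=
  (forall i, a i i = 1) /\ (forall i j, a i j * a j i = 1).

Definition mu {k : fieldType} {n : nat} (v : 'I_n) (l : k) (a : 'M[k]_n)
  : 'M[k]_n :=
  \matrix_(i, j)
    if (i == v) && (j != v) then l^-1 * a i j
    else if (j == v) && (i != v) then l * a i j
    else a i j.

Definition is_linear {k : fieldType} {U V : lmodType k} (f : U -> V) : Prop :=
  forall (c : k) (x y : U), f (c *: x + y) = c *: f x + f y.

(* A Z-graded right S_alpha-module, S_alpha = k<x_1..x_n>/(x_i x_j - a_ij x_j x_i),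
   deg x_i = 1: a family of k-vector spaces M_d (d in Z) with linear maps
   (right multiplication by x_j) M_d -> M_(d+1) satisfying
   (m x_i) x_j = a_ij (m x_j) x_i. *)
Record grmod {k : fieldType} {n : nat} (a : 'M[k]_n) := GrMod {
  gm_sp : int -> lmodType k;
  gm_act : forall (j : 'I_n) (d : int), gm_sp d -> gm_sp (d + 1);
  gm_act_lin : forall (j : 'I_n) (d : int), is_linear (gm_act j d);
  gm_rel : forall (i j : 'I_n) (d : int) (m : gm_sp d),
      gm_act j (d + 1) (gm_act i d m) = a i j *: gm_act i (d + 1) (gm_act j d m)
}.
Arguments gm_sp {k n a}.
Arguments gm_act {k n a} _ _ _.

Record grhom {k : fieldType} {n : nat} {a : 'M[k]_n} (M N : grmod a) := GrHom {
  gh_fun : forall d : int, gm_sp M d -> gm_sp N d;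
  gh_lin : forall d : int, is_linear (gh_fun d);
  gh_comm : forall (j : 'I_n) (d : int) (m : gm_sp M d),
      gh_fun (d + 1) (gm_act M j d m) = gm_act N j d (gh_fun d m)
}.
Arguments gh_fun {k n a M N} _ _.

Section Cat.
Variables (k : fieldType) (n : nat).

Definition heq {a : 'M[k]_n} {M N : grmod a} (f g : grhom M N) : Prop :=
  forall d x, gh_fun f d x = gh_fun g d x.

Definition is_comp {a : 'M[k]_n} {M N P : grmod a}
    (f : grhom M N) (g : grhom N P) (h : grhom M P) : Prop :=
  forall d x, gh_fun h d x = gh_fun g d (gh_fun f d x).

Definition is_id {a : 'M[k]_n} {M : grmod a} (f : grhom M M) : Prop :=
  forall d x, gh_fun f d x = x.

Record functor (a b : 'M[k]_n) := Functor {
  fobj : grmod a -> grmod b;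
  fmap : forall M N : grmod a, grhom M N -> grhom (fobj M) (fobj N);
  fmap_heq : forall (M N : grmod a) (f g : grhom M N),
      heq f g -> heq (fmap M N f) (fmap M N g);
  fmap_id : forall (M : grmod a) (f : grhom M M), is_id f -> is_id (fmap M M f);
  fmap_comp : forall (M N P : grmod a) (f : grhom M N) (g : grhom N P) (h : grhom M P),
      is_comp f g h -> is_comp (fmap M N f) (fmap N P g) (fmap M P h)
}.
Arguments fobj {a b} _ _.
Arguments fmap {a b} _ {M N} _.

Definition nat_iso_id {a b : 'M[k]_n} (F : functor a b) (G : functor b a) : Prop :=
  exists (eta : forall M : grmod a, grhom (fobj G (fobj F M)) M)
         (etainv : forall M : grmod a, grhom M (fobj G (fobj F M))),
    (forall M d x, gh_fun (eta M) d (gh_fun (etainv M) d x) = x) /\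
    (forall M d x, gh_fun (etainv M) d (gh_fun (eta M) d x) = x) /\
    (forall M N (f : grhom M N) d x,
        gh_fun (eta N) d (gh_fun (fmap G (fmap F f)) d x)
        = gh_fun f d (gh_fun (eta M) d x)).

Definition grmod_equiv (a b : 'M[k]_n) : Prop :=
  exists (F : functor a b) (G : functor b a), nat_iso_id F G /\ nat_iso_id G F.

End Cat.
Arguments heq {k n a M N} _ _.
Arguments is_comp {k n a M N P} _ _ _.
Arguments is_id {k n a M} _.
Arguments functor {k n} _ _.
Arguments nat_iso_id {k n a b} _ _.
Arguments grmod_equiv {k n} _ _.

(* Main.v *)
Require Import Defs.
From HB Require Import structures.
From mathcomp Require Import all_boot all_order all_algebra.
From mathcomp Require Import ring.
Import GRing.Theory.
Local Open Scope ring_scope.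

Section Twist.
Variables (k : fieldType) (n : nat).

Lemma lin0 (U V : lmodType k) (f : U -> V) : is_linear f -> f 0 = 0.
Proof.
move=> H; have := H 1 0 0; rewrite !scale1r !addr0 => E.
apply: (@addrI _ (f 0)); rewrite addr0; symmetry; exact: E.
Qed.

Arguments lin0 {U V f}.

Lemma linZ (U V : lmodType k) (f : U -> V) : is_linear f ->
  forall c x, f (c *: x) = c *: f x.
Proof. by move=> H c0 x; have := H c0 x 0; rewrite (lin0 H) !addr0. Qed.

Arguments linZ {U V f}.
Variables (c : 'I_n -> int -> k) (a b : 'M[k]_n).
Hypothesis Hc : forall i j d,
  b i j * (c i (d + 1) * c j d) = a i j * (c j (d + 1) * c i d).

Definition tw (M : grmod a) : grmod b.
refine (@GrMod k n b (gm_sp M) (fun j d m => c j d *: gm_act M j d m) _ _).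
- move=> j d s x y; rewrite (@gm_act_lin _ _ _ M j d) scalerDr !scalerA mulrC //.
- move=> i j d m.
  rewrite (linZ (@gm_act_lin _ _ _ M j (d + 1))) (linZ (@gm_act_lin _ _ _ M i (d + 1))).
  rewrite !scalerA (@gm_rel _ _ _ M i j d m) scalerA.
  by congr (_ *: _); rewrite -[RHS]mulrA Hc mulrC.
Defined.

Definition twh (M N : grmod a) (f : grhom M N) : grhom (tw M) (tw N).
refine (@GrHom k n b (tw M) (tw N) (gh_fun f) (@gh_lin _ _ _ _ _ f) _).
move=> j d m /=. by rewrite (linZ (@gh_lin _ _ _ _ _ f (d + 1))) (@gh_comm _ _ _ _ _ f).
Defined.

Definition twF : functor a b.
refine (@Functor k n a b tw twh _ _ _).
- by move=> M N f g H d x; apply: H.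
- by move=> M f H d x; apply: H.
- by move=> M N P f g h H d x; apply: H.
Defined.
End Twist.
Arguments twF {k n c a b} Hc.

Section Iso.
Variables (k : fieldType) (n : nat) (c c' : 'I_n -> int -> k) (a b : 'M[k]_n).
Hypothesis Hc : forall i j d,
  b i j * (c i (d + 1) * c j d) = a i j * (c j (d + 1) * c i d).
Hypothesis Hc' : forall i j d,
  a i j * (c' i (d + 1) * c' j d) = b i j * (c' j (d + 1) * c' i d).
Hypothesis Hcc : forall j d, c' j d * c j d = 1.

Lemma iso_tw : nat_iso_id (twF Hc) (twF Hc').
Proof.
have eta_comm : forall (M : grmod a) j d (m : gm_sp (@fobj _ _ _ _ (twF Hc') (@fobj _ _ _ _ (twF Hc) M)) d),
    gm_act (@fobj _ _ _ _ (twF Hc') (@fobj _ _ _ _ (twF Hc) M)) j d m = gm_act M j d m.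
  by move=> M j d m /=; rewrite scalerA Hcc scale1r.
exists (fun M => @GrHom k n a (@fobj _ _ _ _ (twF Hc') (@fobj _ _ _ _ (twF Hc) M)) M (fun d x => x) (fun d c0 x y => erefl) (eta_comm M)).
have inv_comm : forall (M : grmod a) j d (m : gm_sp M d),
    gm_act M j d m = gm_act (@fobj _ _ _ _ (twF Hc') (@fobj _ _ _ _ (twF Hc) M)) j d m.
  by move=> M j d m; rewrite eta_comm.
exists (fun M => @GrHom k n a M (@fobj _ _ _ _ (twF Hc') (@fobj _ _ _ _ (twF Hc) M)) (fun d x => x) (fun d c0 x y => erefl) (inv_comm M)).
by split.
Qed.
End Iso.
Arguments iso_tw {k n c c' a b} Hc Hc' Hcc.

Theorem lemma2p6 (k : closedFieldType) (Hchar : [pchar k] =i pred0)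
  (n : nat) (a a' : 'M[k]_n) (Ha : skew_param a) (Ha' : skew_param a')
  (v : 'I_n) (l : k) (Hl : l != 0) (Hmu : a' = mu v l a) :
  grmod_equiv a a'.
Proof.
pose c := fun (j : 'I_n) (d : int) => if j == v then l ^ d else 1.
pose c' := fun (j : 'I_n) (d : int) => (c j d)^-1.
have cnz : forall j d, c j d != 0.
  move=> j d; rewrite /c; case: (j == v); last exact: oner_neq0.
  by rewrite expfz_eq0 negb_and Hl orbT.
have lS : forall d : int, l ^ (d + 1) = l ^ d * l.
  by move=> d; rewrite expfzDr // expr1z.
have Hc : forall i j d,
  a' i j * (c i (d + 1) * c j d) = a i j * (c j (d + 1) * c i d).
  move=> i j d; rewrite Hmu /mu mxE /c.
  case: (eqVneq i v) => [->|iv]; case: (eqVneq j v) => [->|jv] //=.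
  - by rewrite lS; field.
  - by rewrite lS; ring.
have Hc' : forall i j d,
  a i j * (c' i (d + 1) * c' j d) = a' i j * (c' j (d + 1) * c' i d).
  move=> i j d.
  have Ea' : a' i j = a i j * (c j (d + 1) * c i d) / (c i (d + 1) * c j d).
    by rewrite -Hc mulfK // mulf_neq0.
  by rewrite /c' Ea'; field; rewrite !cnz.
have Hcc : forall j d, c' j d * c j d = 1 by move=> j d; rewrite mulVf.
have Hcc' : forall j d, c j d * c' j d = 1 by move=> j d; rewrite mulfV.
exists (twF Hc), (twF Hc'); split.
- exact: iso_tw.
- exact: (iso_tw Hc' Hc Hcc').
Qed.
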